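(* For any positive integer $k$ and for $n\ge 3$, $\dim_{k,f}(C_n)=\frac{n}{n-1}$ if $n \le 2k+3$ and $n$ is odd; $\dim_{k,f}(C_n)=\frac{n}{n-2}$ if $n\le 2k+3$ and $n$ is even; and $\dim_{k,f}(C_n)=\frac{n}{2(k+1)}$ if $n\ge 2k+4$.
   Context: $C_n$ is the cycle on $n$ vertices. $d(x,y)$ is the distance in $G$. For a positive integer $k$, $d_k(x,y)=\min\{d(x,y),k+1\}$ and $R_k\{x,y\}=\{z\in V(G): d_k(x,z)\neq d_k(y,z)\}$. For a function $g$ on $V(G)$ and $U\subseteq V(G)$, $g(U)=\sum_{s\in U}g(s)$. A function $h:V(G)\to[0,1]$ is a $k$-truncated resolving function of $G$ if $h(R_k\{x,y\})\ge 1$ for all distinct $x,y\in V(G)$; $\dim_{k,f}(G)$ is the minimum of $h(V(G))$ over all such $h$. *)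

(* Defs.v *)
From mathcomp Require Import all_boot all_order all_algebra.
Set Implicit Arguments. Unset Strict Implicit. Unset Printing Implicit Defensive.
Import Order.TTheory GRing.Theory Num.Theory.

(* The cycle C_n has vertex set 'I_n, with i adjacent to i+1 mod n.
   Its graph distance is d(i,j) = min(|i-j|, n-|i-j|). *)
Definition absdiff (a b : nat) : nat := if a <= b then b - a else a - b.

Definition cycle_dist (n : nat) (x y : 'I_n) : nat :=
  minn (absdiff x y) (n - absdiff x y).

Definition tdist (n k : nat) (x y : 'I_n) : nat := minn (cycle_dist x y) k.+1.

Definition Rk (n k : nat) (x y : 'I_n) : {set 'I_n} :=
  [set z | tdist k x z != tdist k y z].

Local Open Scope ring_scope.

Definition trunc_resolving (R : realFieldType) (n k : nat) (h : 'I_n -> R) : Prop :=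
  (forall v, 0 <= h v <= 1) /\
  (forall x y : 'I_n, x != y -> 1 <= \sum_(z in Rk k x y) h z).

Definition dimkf_is (R : realFieldType) (n k : nat) (v : R) : Prop :=
  (exists h : 'I_n -> R, trunc_resolving k h /\ \sum_z h z = v) /\
  (forall h : 'I_n -> R, trunc_resolving k h -> v <= \sum_z h z).

(* Main.v *)
Require Import Defs.
From mathcomp Require Import all_boot all_order all_algebra.
From mathcomp Require Import zify.
Import Order.TTheory GRing.Theory Num.Theory.

Definition cd (N a b : nat) := minn (a - b + (b - a)) (N - (a - b + (b - a))).

Lemma tdE N k (x z : 'I_N) : tdist k x z = minn (cd N x z) k.+1.
Proof. rewrite /tdist /cycle_dist /absdiff /cd; case: leqP => h; congr (minn (minn _ (_ - _)) _); lia. Qed.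

Lemma card_ge n (A : {set 'I_n.+1}) m (f : nat -> nat) :
  (forall j, j < m -> f j < n.+1) ->
  (forall j j', j < m -> j' < m -> f j = f j' -> j = j') ->
  (forall j, j < m -> (inord (f j) : 'I_n.+1) \in A) -> m <= #|A|.
Proof.
move=> Hb Hi Hm.
have U : uniq [seq (inord (f j) : 'I_n.+1) | j <- iota 0 m].
  rewrite map_inj_in_uniq ?iota_uniq // => j j'; rewrite !mem_iota !add0n => /= Hj Hj' E.
  apply: Hi => //. by have := congr1 val E; rewrite /= !inordK // ?Hb.
have := uniq_leq_size U (s2 := enum A).
rewrite size_map size_iota cardE; apply => z /mapP [j]; rewrite mem_iota => /andP[_ Hj] ->.
by rewrite mem_enum; apply: Hm.
Qed.

Lemma card_le n (A : {set 'I_n.+1}) m (f : nat -> nat) :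
  (forall z, z \in A -> exists2 j, j < m & nat_of_ord z = f j) -> #|A| <= m.
Proof.
move=> H. rewrite cardE.
have <- : size [seq (inord (f j) : 'I_n.+1) | j <- iota 0 m] = m by rewrite size_map size_iota.
apply: uniq_leq_size; first exact: enum_uniq.
move=> z; rewrite mem_enum => /H [j Hj E]. apply/mapP; exists j; first by rewrite mem_iota.
by rewrite -E inord_val.
Qed.

Lemma card_le1 (T : finType) (A : {set T}) :
  (forall a b, a \in A -> b \in A -> a = b) -> #|A| <= 1.
Proof.
move=> H. case: (set_0Vmem A) => [->|[a Ha]]; first by rewrite cards0.
have : A \subset [set a].
  by apply/subsetP => c Hc; rewrite inE (H c a).
by move/subset_leq_card; rewrite cards1.
Qed.

Lemma card_le2 (T : finType) (A : {set T}) :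
  (forall a b c, a \in A -> b \in A -> c \in A -> a = b \/ a = c \/ b = c) -> #|A| <= 2.
Proof.
move=> H. case: (set_0Vmem A) => [->|[a Ha]]; first by rewrite cards0.
case: (set_0Vmem (A :\ a)) => [E|[b]].
  have : A \subset [set a].
    apply/subsetP => c Hc. rewrite inE. apply/negPn/negP => Hca.
    have : c \in A :\ a by rewrite !inE Hca.
    by rewrite E inE.
  by move/subset_leq_card; rewrite cards1 => h; apply: leq_trans h _.
rewrite !inE => /andP[Hba Hb].
have : A \subset [set a; b].
  apply/subsetP => c Hc; rewrite !inE.
  case: (H a b c Ha Hb Hc) => [E|[E|E]].
  - by rewrite E eqxx in Hba.
  - by rewrite E eqxx.
  - by rewrite E eqxx orbT.
by move/subset_leq_card; rewrite cards2 => h; apply: leq_trans h _; case: (_ != _).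
Qed.


Ltac splitifs :=
  repeat match goal with H : context [if _ then _ else _] |- _ => revert H end;
  repeat match goal with |- context [if ?b then _ else _] => case: (boolP b) end;
  intros.

Definition nxt (N i : nat) := if i.+1 < N then i.+1 else 0.
Definition nxt2 (N i : nat) := if i.+2 < N then i.+2 else i.+2 - N.

Lemma eqside N x y z : x < N -> y < N -> z < N -> x <> y -> cd N x z = cd N y z ->
  x + y = 2 * z \/ x + y = 2 * z + N \/ x + y + N = 2 * z.
Proof. rewrite /cd => *. lia. Qed.

Lemma td_small n k (x z : 'I_n.+1) : n.+1 <= 2*k+3 -> tdist k x z = cd n.+1 x z.
Proof. move=> H; rewrite tdE /cd; have := ltn_ord x; have := ltn_ord z; lia. Qed.

Lemma neq_val N (x y : 'I_N) : x != y -> (x:nat) <> y.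
Proof. by move=> H E; move/eqP: H; apply; apply: val_inj. Qed.

Lemma U_odd n k (x y : 'I_n.+1) : n.+1 <= 2*k+3 -> odd n.+1 -> x != y ->
  n.+1 - 1 <= #|Rk k x y|.
Proof.
move=> Hn Ho /neq_val xy.
have := odd_double_half n.+1; rewrite Ho /= -mul2n => E.
have C := cardsC (Rk k x y); rewrite card_ord in C.
have : #|~: Rk k x y| <= 1.
  apply: card_le1 => a b; rewrite !inE !negbK !td_small // => /eqP Ha /eqP Hb.
  have := eqside _ _ _ _ (ltn_ord x) (ltn_ord y) (ltn_ord a) xy Ha.
  have := eqside _ _ _ _ (ltn_ord x) (ltn_ord y) (ltn_ord b) xy Hb.
  have := ltn_ord a; have := ltn_ord b.
  move=> *; apply: val_inj => /=; lia.
move: C; set a := #|Rk k x y|; set b := #|~: Rk k x y|; lia.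
Qed.

Lemma U_even n k (x y : 'I_n.+1) : n.+1 <= 2*k+3 -> ~~ odd n.+1 -> x != y ->
  n.+1 - 2 <= #|Rk k x y|.
Proof.
move=> Hn Ho /neq_val xy.
have := odd_double_half n.+1; rewrite (negbTE Ho) /= -mul2n => E.
have C := cardsC (Rk k x y); rewrite card_ord in C.
have : #|~: Rk k x y| <= 2.
  apply: card_le2 => a b c; rewrite !inE !negbK !td_small // => /eqP Ha /eqP Hb /eqP Hc.
  have := eqside _ _ _ _ (ltn_ord x) (ltn_ord y) (ltn_ord a) xy Ha.
  have := eqside _ _ _ _ (ltn_ord x) (ltn_ord y) (ltn_ord b) xy Hb.
  have := eqside _ _ _ _ (ltn_ord x) (ltn_ord y) (ltn_ord c) xy Hc.
  have := ltn_ord a; have := ltn_ord b; have := ltn_ord c.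
  move=> *.
  have : (a:nat) = b \/ (a:nat) = c \/ (b:nat) = c by lia.
  by case=> [h|[h|h]]; [left|right;left|right;right]; apply: val_inj.
move: C; set a := #|Rk k x y|; set b := #|~: Rk k x y|; lia.
Qed.

Lemma cd_off N a b r : a < N -> b < N -> r <= N -> (b = a + r \/ b + N = a + r) ->
  cd N a b = minn r (N - r).
Proof. rewrite /cd => *; lia. Qed.

Lemma inR n k (x y : 'I_n.+1) v rx ry : v < n.+1 -> rx <= n.+1 -> ry <= n.+1 ->
  (v = x + rx \/ v + n.+1 = x + rx) -> (v = y + ry \/ v + n.+1 = y + ry) ->
  minn (minn rx (n.+1 - rx)) k.+1 != minn (minn ry (n.+1 - ry)) k.+1 ->
  (inord v : 'I_n.+1) \in Rk k x y.
Proof.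
move=> Hv Hx Hy Ex Ey H.
by rewrite inE !tdE inordK // (cd_off _ _ _ _ _ Hv Hx) // (cd_off _ _ _ _ _ Hv Hy).
Qed.

Lemma off N (a b : 'I_N) : exists r, r < N /\ (nat_of_ord b = a + r \/ b + N = a + r).
Proof.
have := ltn_ord a; have := ltn_ord b.
case: (leqP a b) => h; [exists (b - a) | exists (b + N - a)]; lia.
Qed.

Lemma U_large n k (x y : 'I_n.+1) : 0 < k -> 2*k+4 <= n.+1 -> x != y ->
  2*(k+1) <= #|Rk k x y|.
Proof.
move=> k0 Hn /neq_val xy.
have Hx := ltn_ord x; have Hy := ltn_ord y.
have [s Hs] : exists s, (x <= y /\ s = y - x) \/ (y < x /\ s = y + n.+1 - x).
  by case: (leqP x y) => h; [exists (y - x); left | exists (y + n.+1 - x); right].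
case: (leqP s (n.+1 - 2*k - 1)) => Ha.
  apply: (@card_ge n _ _ (fun j => if j <= k then (if j <= x then x - j else x + n.+1 - j)
     else (if y + (j - k.+1) < n.+1 then y + (j - k.+1) else y + (j - k.+1) - n.+1))).
  - move=> j Hj /=; splitifs; lia.
  - move=> j j' Hj Hj' /=; splitifs; lia.
  - move=> j Hj /=. case: (leqP j k) => Hjk.
      apply: (@inR n k x y _ (n.+1 - j) (n.+1 - s - j)); splitifs; lia.
    apply: (@inR n k x y _ (s + (j - k.+1)) (j - k.+1)); splitifs; lia.
case: (leqP (2*k+1) s) => Hb.
  apply: (@card_ge n _ _ (fun j => if j <= k then (if x + j < n.+1 then x + j else x + j - n.+1)
     else (if j - k.+1 <= y then y - (j - k.+1) else y + n.+1 - (j - k.+1)))).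
  - move=> j Hj /=; splitifs; lia.
  - move=> j j' Hj Hj' /=; splitifs; lia.
  - move=> j Hj /=. case: (leqP j k) => Hjk.
      apply: (@inR n k x y _ j (n.+1 - s + j)); splitifs; lia.
    apply: (@inR n k x y _ (s - (j - k.+1)) (n.+1 - (j - k.+1))); splitifs; lia.
have mid : forall z : 'I_n.+1, tdist k x z = tdist k y z ->
    x + y = 2 * z \/ x + y = 2 * z + n.+1 \/ x + y + n.+1 = 2 * z.
  move=> z; have Hz := ltn_ord z.
  have [rx [Hrx Ex]] := off _ x z. have [ry [Hry Ey]] := off _ y z.
  rewrite !tdE (cd_off _ _ _ _ Hx Hz (ltnW Hrx) Ex) (cd_off _ _ _ _ Hy Hz (ltnW Hry) Ey).
  move=> E; lia.
have C := cardsC (Rk k x y); rewrite card_ord in C.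
have : #|~: Rk k x y| <= 2.
  apply: card_le2 => a b c; rewrite !inE !negbK => /eqP /mid H1 /eqP /mid H2 /eqP /mid H3.
  have := ltn_ord a; have := ltn_ord b; have := ltn_ord c.
  move=> *.
  have : (a:nat) = b \/ (a:nat) = c \/ (b:nat) = c by lia.
  by case=> [h|[h|h]]; [left|right;left|right;right]; apply: val_inj.
move: C; set a := #|Rk k x y|; set b := #|~: Rk k x y|; lia.
Qed.

Lemma notR N k (x y z : 'I_N) rx ry : rx <= N -> ry <= N ->
  (nat_of_ord z = x + rx \/ z + N = x + rx) -> (nat_of_ord z = y + ry \/ z + N = y + ry) ->
  minn (minn rx (N - rx)) k.+1 = minn (minn ry (N - ry)) k.+1 ->
  tdist k x z = tdist k y z.
Proof.
move=> Hx Hy Ex Ey H.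
by rewrite !tdE (cd_off _ _ _ _ (ltn_ord x) (ltn_ord z) Hx Ex) (cd_off _ _ _ _ (ltn_ord y) (ltn_ord z) Hy Ey).
Qed.

Lemma L_odd n k (z : 'I_n.+1) : n.+1 <= 2*k+3 -> odd n.+1 ->
  #|[set i : 'I_n.+1 | z \in Rk k i (inord (nxt n.+1 i))]| <= n.+1 - 1.
Proof.
move=> Hn Ho. have := odd_double_half n.+1; rewrite Ho /= -mul2n => E.
have Hz := ltn_ord z.
move: E; set m := n.+1./2 => E.
pose v0 := if z + m < n.+1 then z + m else z + m - n.+1.
have Hv0 : v0 < n.+1 by rewrite /v0; splitifs; lia.
pose i0 : 'I_n.+1 := inord v0.
have e0 : nat_of_ord i0 = v0 by rewrite inordK.
have e1 : nat_of_ord (inord (nxt n.+1 i0) : 'I_n.+1) = nxt n.+1 v0.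
  by rewrite inordK e0 // /nxt; splitifs; lia.
apply: leq_trans (subset_leq_card (_ : _ \subset ~: [set i0])) _; last first.
  by rewrite cardsC1 card_ord; lia.
apply/subsetP => i; rewrite !inE; apply: contra => /eqP ->.
apply/eqP.
apply: (@notR _ k _ _ z (n.+1 - m) (n.+1 - m - 1)); rewrite ?e1 ?e0 /nxt /v0; splitifs; lia.
Qed.

Lemma L_even n k (z : 'I_n.+1) : 3 <= n.+1 -> n.+1 <= 2*k+3 -> ~~ odd n.+1 ->
  #|[set i : 'I_n.+1 | z \in Rk k i (inord (nxt2 n.+1 i))]| <= n.+1 - 2.
Proof.
move=> H3 Hn Ho. have := odd_double_half n.+1; rewrite (negbTE Ho) /= -mul2n => E.
have Hz := ltn_ord z.
move: E; set m := n.+1./2 => E.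
pose v0 := if 0 < z then z - 1 else n.
pose v1 := if z + m - 1 < n.+1 then z + m - 1 else z + m - 1 - n.+1.
have Hv0 : v0 < n.+1 by rewrite /v0; splitifs; lia.
have Hv1 : v1 < n.+1 by rewrite /v1; splitifs; lia.
pose i0 : 'I_n.+1 := inord v0.
pose i1 : 'I_n.+1 := inord v1.
have e0 : nat_of_ord i0 = v0 by rewrite inordK.
have e1 : nat_of_ord i1 = v1 by rewrite inordK.
have f0 : nat_of_ord (inord (nxt2 n.+1 i0) : 'I_n.+1) = nxt2 n.+1 v0.
  by rewrite inordK e0 // /nxt2; splitifs; lia.
have f1 : nat_of_ord (inord (nxt2 n.+1 i1) : 'I_n.+1) = nxt2 n.+1 v1.
  by rewrite inordK e1 // /nxt2; splitifs; lia.
have d01 : i0 != i1.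
  apply/eqP => /(congr1 val) /=; rewrite -/(nat_of_ord i0) -/(nat_of_ord i1) e0 e1 /v0 /v1.
  splitifs; lia.
apply: leq_trans (subset_leq_card (_ : _ \subset ~: [set i0; i1])) _; last first.
  have := cardsC [set i0; i1]; rewrite cards2 d01 card_ord.
  move=> C; move: C; set a := #|~: [set i0; i1]|; lia.
apply/subsetP => i; rewrite !inE; apply: contra => /orP [] /eqP ->;
  apply/eqP.
  apply: (@notR _ k _ _ z 1 (n.+1 - 1)); rewrite ?f0 ?e0 /nxt2 /v0; splitifs; lia.
apply: (@notR _ k _ _ z (n.+1 - m + 1) (n.+1 - m - 1)); rewrite ?f1 ?e1 /nxt2 /v1; splitifs; lia.
Qed.

Lemma L_large n k (z : 'I_n.+1) : 0 < k -> 2*k+4 <= n.+1 ->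
  #|[set i : 'I_n.+1 | z \in Rk k i (inord (nxt n.+1 i))]| <= 2*(k+1).
Proof.
move=> k0 Hn. have Hz := ltn_ord z.
apply: (@card_le n _ (2*(k+1)) (fun j => if j <= k.+1 then
   (if k.+1 - j <= z then z - (k.+1 - j) else z + n.+1 - (k.+1 - j))
   else (if z + (j - k.+1) < n.+1 then z + (j - k.+1) else z + (j - k.+1) - n.+1))).
move=> i; rewrite inE => H; rewrite inE !tdE in H.
have Hi := ltn_ord i.
have e1 : nat_of_ord (inord (nxt n.+1 i) : 'I_n.+1) = nxt n.+1 i.
  by rewrite inordK // /nxt; splitifs; lia.
have [r [Hr Er]] := off _ i z.
have [r' [Hr' Er']] := off _ (inord (nxt n.+1 i) : 'I_n.+1) z.
have Hn1 := ltn_ord (inord (nxt n.+1 i) : 'I_n.+1).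
rewrite (cd_off _ _ _ _ Hi Hz (ltnW Hr) Er) (cd_off _ _ _ _ Hn1 Hz (ltnW Hr') Er') in H.
rewrite e1 in Er'.
have : r <= k.+1 \/ n.+1 - k <= r.
  move: H Er'; rewrite /nxt; splitifs; lia.
case=> hr; [exists (k.+1 - r) | exists (k.+1 + n.+1 - r)]; splitifs; lia.
Qed.

Local Open Scope ring_scope.

Lemma dim_gen (R : realFieldType) N k c (p : 'I_N -> 'I_N * 'I_N) :
  (0 < c)%N ->
  (forall x y : 'I_N, x != y -> (c <= #|Rk k x y|)%N) ->
  (forall i, (p i).1 != (p i).2) ->
  (forall z, (#|[set i | z \in Rk k (p i).1 (p i).2]| <= c)%N) ->
  @dimkf_is R N k (N%:R / c%:R).
Proof.
move=> c0 HU Hp HL. have cR : (0 : R) < c%:R by rewrite ltr0n.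
split.
- exists (fun _ => c%:R^-1). split; last by rewrite sumr_const (_ : #|_| = N) ?card_ord // -[_ *+ N]mulr_natl.
  split.
    move=> v. by rewrite invr_ge0 ler0n /= invf_le1 // ler1n.
  move=> x y /HU h. by rewrite sumr_const -[_ *+ _]mulr_natl ler_pdivlMr // mul1r ler_nat.
- move=> h [Hh Hr]. rewrite ler_pdivrMr //.
  have -> : N%:R = \sum_(i : 'I_N) (1:R) by rewrite sumr_const card_ord.
  apply: le_trans (_ : _ <= \sum_(i : 'I_N) \sum_(z in Rk k (p i).1 (p i).2) h z) _.
    by apply: ler_sum => i _; apply: Hr; apply: Hp.
  under eq_bigr => i _ do rewrite big_mkcond.
  rewrite exchange_big /= mulr_suml. apply: ler_sum => z _.
  rewrite -big_mkcond /=.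
  rewrite (eq_bigl (fun i => i \in [set i | z \in Rk k (p i).1 (p i).2])); last by move=> i; rewrite inE.
  rewrite sumr_const -[_ *+ #|_|]mulr_natr ler_wpM2l //; first by case/andP: (Hh z).
  by rewrite ler_nat.
Qed.

Lemma nxt_neq n (i : 'I_n.+1) : (1 < n.+1)%N -> i != inord (nxt n.+1 i).
Proof.
move=> H; apply/eqP => E; have Hi := ltn_ord i.
have := congr1 (@nat_of_ord _) E.
rewrite inordK; rewrite /nxt; splitifs; lia.
Qed.

Lemma nxt2_neq n (i : 'I_n.+1) : (2 < n.+1)%N -> i != inord (nxt2 n.+1 i).
Proof.
move=> H; apply/eqP => E; have Hi := ltn_ord i.
have := congr1 (@nat_of_ord _) E.
rewrite inordK; rewrite /nxt2; splitifs; lia.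
Qed.

Theorem theorem3p4 (R : realFieldType) (k n : nat) :
  (0 < k)%N -> (3 <= n)%N ->
  [/\ ((n <= 2 * k + 3)%N -> odd n -> @dimkf_is R n k (n%:R / (n - 1)%:R)),
      ((n <= 2 * k + 3)%N -> ~~ odd n -> @dimkf_is R n k (n%:R / (n - 2)%:R)) &
      ((2 * k + 4 <= n)%N -> @dimkf_is R n k (n%:R / (2 * (k + 1))%:R))].
Proof.
move=> k0; case: n => [//|n] n3.
split.
- move=> Hn Ho.
  apply: (@dim_gen R n.+1 k (n.+1 - 1) (fun i => (i, inord (nxt n.+1 i)))).
  + by rewrite subn1 /=; case: n n3 {Hn Ho}.
  + by move=> x y; apply: U_odd.
  + by move=> i /=; apply: nxt_neq; apply: leq_trans n3.
  + by move=> z; apply: L_odd.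
- move=> Hn Ho.
  apply: (@dim_gen R n.+1 k (n.+1 - 2) (fun i => (i, inord (nxt2 n.+1 i)))).
  + by rewrite subn_gt0.
  + by move=> x y; apply: U_even.
  + by move=> i /=; apply: nxt2_neq.
  + by move=> z; apply: L_even.
- move=> Hn.
  apply: (@dim_gen R n.+1 k (2 * (k + 1)) (fun i => (i, inord (nxt n.+1 i)))).
  + by rewrite muln_gt0 addn1.
  + by move=> x y; apply: U_large.
  + by move=> i /=; apply: nxt_neq; apply: leq_trans n3.
  + by move=> z; apply: L_large.
Qed.
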